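(* A magma $(Q,\cdot)$ is a double Ward quasigroup (for some element of $Q$) if and only if it is cancellative and has an idempotent $e$ (i.e. $ee=e$) such that $(e\cdot xz)(ey\cdot z)=xy$ for all $x,y,z\in Q$.
   Context: A quasigroup is a magma in which $ax=b$ and $ya=b$ have unique solutions for all $a,b$. A double Ward quasigroup $(Q,\cdot,e)$ is a quasigroup with an element $e$ such that $(ee\cdot xz)(ey\cdot z)=xy$ for all $x,y,z$. A magma is cancellative if it is both left and right cancellative. *)

(* Defs.v *)
Definition quasigroup {Q : Type} (op : Q -> Q -> Q) : Prop :=
  (forall a b : Q, exists x, op a x = b /\ forall x', op a x' = b -> x' = x) /\
  (forall a b : Q, exists y, op y a = b /\ forall y', op y' a = b -> y' = y).

Definition double_ward_identity {Q : Type} (op : Q -> Q -> Q) (e : Q) : Prop :=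
  forall x y z : Q, op (op (op e e) (op x z)) (op (op e y) z) = op x y.

Definition double_ward_quasigroup {Q : Type} (op : Q -> Q -> Q) (e : Q) : Prop :=
  quasigroup op /\ double_ward_identity op e.

Definition left_cancellative {Q : Type} (op : Q -> Q -> Q) : Prop :=
  forall a x y : Q, op a x = op a y -> x = y.

Definition right_cancellative {Q : Type} (op : Q -> Q -> Q) : Prop :=
  forall a x y : Q, op x a = op y a -> x = y.

Definition cancellative {Q : Type} (op : Q -> Q -> Q) : Prop :=
  left_cancellative op /\ right_cancellative op.

(* Main.v *)
Require Import Defs.

Theorem corollary4p12 (Q : Type) (op : Q -> Q -> Q) :
  (exists e : Q, double_ward_quasigroup op e) <->
  (cancellative op /\
   exists e : Q, op e e = e /\
     forall x y z : Q, op (op e (op x z)) (op (op e y) z) = op x y).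
Proof.
  split.
  - intros [e [[HL HR] I]].
    assert (LC : left_cancellative op).
    { intros a x y H. destruct (HL a (op a x)) as [w [_ Hw]].
      rewrite (Hw x eq_refl), (Hw y (eq_sym H)). reflexivity. }
    assert (RC : right_cancellative op).
    { intros a x y H. destruct (HR a (op x a)) as [w [_ Hw]].
      rewrite (Hw x eq_refl), (Hw y (eq_sym H)). reflexivity. }
    destruct (HL e e) as [y0 [Hy0 _]].
    destruct (HR e e) as [x0 [Hx0 _]].
    assert (H1 : op (op (op e e) e) e = e).
    { pose proof (I e y0 y0) as H. rewrite Hy0 in H. rewrite Hy0 in H. exact H. }
    assert (H2 : op (op (op e e) e) (op (op e e) e) = e).
    { pose proof (I x0 e e) as H. rewrite Hx0 in H. exact H. }
    assert (H3 : op (op e e) e = e).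
    { symmetry. apply (LC (op (op e e) e)). rewrite H1, H2. reflexivity. }
    assert (Hee : op e e = e).
    { rewrite H3 in H1. exact H1. }
    split; [split; assumption|].
    exists e. split; [exact Hee|].
    intros x y z. pose proof (I x y z) as H. rewrite Hee in H. exact H.
  - intros [[LC RC] [e [Hee I]]].
    assert (R' : forall x, op e (op x e) = x).
    { intros x. apply (RC e). pose proof (I x e e) as H.
      rewrite Hee, Hee in H. exact H. }
    assert (P' : forall y, op (op e y) e = y).
    { intros y. apply (LC e). pose proof (I e y e) as H.
      rewrite !Hee in H. exact H. }
    exists e. split; [split|].
    + intros a b. exists (op b (op (op a e) e)). split.
      * pose proof (I e (op b e) (op (op a e) e)) as H.
        rewrite ?Hee, R', R', R' in H. exact H.
      * intros x' Hx'. apply (LC a). rewrite Hx'.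
        pose proof (I e (op b e) (op (op a e) e)) as H.
        rewrite ?Hee, R', R', R' in H. symmetry. exact H.
    + intros a b. exists (op e (op (op e b) (op a e))). split.
      * pose proof (I (op e b) e (op a e)) as H.
        rewrite ?Hee, R', P' in H. exact H.
      * intros y' Hy'. apply (RC a). rewrite Hy'.
        pose proof (I (op e b) e (op a e)) as H.
        rewrite ?Hee, R', P' in H. symmetry. exact H.
    + intros x y z. rewrite Hee. apply I.
Qed.
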